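(* Let $G=K_{r_1,\dots,r_k}$ be a complete multipartite graph with $|V(G)|=r_1+\cdots+r_k$ even. Then $G$ has a good bisection.
   Context: A bisection of a graph $G$ is a bipartite spanning subgraph $H$ of $G$ with a bipartition into two partition sets (every edge of $H$ joining the two sets) whose sizes differ by at most one. A bisection $H$ of $G$ is good if $2d_H(v)\ge d_G(v)-1$ for every $v\in V(G)$. *)

(* Defs.v *)
From mathcomp Require Import all_boot.
Set Implicit Arguments. Unset Strict Implicit. Unset Printing Implicit Defensive.

Definition simple_graph (T : finType) (e : rel T) : Prop :=
  symmetric e /\ irreflexive e.

Definition deg (T : finType) (e : rel T) (v : T) : nat := #|[set w | e v w]|.

Definition spanning_subgraph (T : finType) (h e : rel T) : Prop :=
  simple_graph h /\ forall u v, h u v -> e u v.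

Definition bipartite_with (T : finType) (h : rel T) (A : {set T}) : Prop :=
  forall u v, h u v -> (u \in A) != (v \in A).

Definition bisection (T : finType) (e h : rel T) (A : {set T}) : Prop :=
  spanning_subgraph h e /\ bipartite_with h A /\
  (#|A| <= #|~: A|.+1 /\ #|~: A| <= #|A|.+1)%N.

Definition good_bisection (T : finType) (e h : rel T) (A : {set T}) : Prop :=
  bisection e h A /\ forall v, (deg e v <= (deg h v).*2.+1)%N.

(* The complete multipartite graph K_{r_1,...,r_k}: vertices are pairs (i, j)
   with i : 'I_k the part and j : 'I_(r i) the index in the part; two vertices
   are adjacent iff they lie in different parts. *)
Definition kmp_vertex (k : nat) (r : 'I_k -> nat) : finType :=
  {i : 'I_k & 'I_(r i)}.

Definition kmp_adj (k : nat) (r : 'I_k -> nat) : rel (kmp_vertex r) :=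
  fun u v => tag u != tag v.

(* Main.v *)
Require Import Defs.
From mathcomp Require Import all_boot zify.

Lemma card_sum1 (U : finType) (Q : pred U) : #|[set x | Q x]| = \sum_(x | Q x) 1.
Proof. by rewrite -sum1_card; apply: eq_bigl => x; rewrite inE. Qed.

Section K.
Variables (k : nat) (r : 'I_k -> nat).
Local Notation T := (kmp_vertex r).

Lemma card_kmp (P : pred T) :
  #|[set w | P w]| = \sum_i #|[set j : 'I_(r i) | P (Tagged (fun i => 'I_(r i)) j)]|.
Proof.
have E (U : finType) (Q : pred U) : #|[set x | Q x]| = \sum_(x | Q x) 1.
  by rewrite -sum1_card; apply: eq_bigl => x; rewrite inE.
rewrite (E _ P) (eq_bigr (fun i => \sum_(j : 'I_(r i) | P (Tagged (fun i => 'I_(r i)) j)) 1)); last first.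
  by move=> i _; rewrite (E _ (fun j => P (Tagged (fun i => 'I_(r i)) j))).
rewrite (sig_big_dep (fun _ => true) (fun i j => P (Tagged (fun i => 'I_(r i)) j)) (fun _ _ => 1%N)) /=.
by apply: eq_bigl => -[i j].
Qed.

Lemma sum_lt (n a : nat) : \sum_(j < n) ((j < a)%N : nat) = minn a n.
Proof.
elim: n => [|n IH]; first by rewrite big_ord0; lia.
rewrite big_ord_recr /= IH; case: (ltnP n a) => /= H; lia.
Qed.

Lemma card_lt n a : #|[set j : 'I_n | j < a]| = minn a n.
Proof.
rewrite (@card_sum1 _ (fun j : 'I_n => j < a)) big_mkcond /= -sum_lt; apply: eq_bigr => j _.
by case: (j < a).
Qed.

Lemma card_ge n a : #|[set j : 'I_n | ~~ (j < a)]| = n - minn a n.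
Proof.
have := cardsC [set j : 'I_n | j < a]; rewrite card_ord card_lt => H.
have -> : [set j : 'I_n | ~~ (j < a)] = ~: [set j : 'I_n | j < a].
  by apply/setP => j; rewrite !inE.
lia.
Qed.

Lemma big_step (F : 'I_k -> nat) m (h : m < k) :
  \sum_(i < k | i < m.+1) F i = \sum_(i < k | i < m) F i + F (Ordinal h).
Proof.
rewrite (bigD1 (Ordinal h)) //= addnC; congr (_ + _).
apply: eq_bigl => i; rewrite ltnS -val_eqE /=; case: ltngtP => //.
Qed.


Lemma card_const (U : finType) (b : bool) : #|[set x : U | b]| = b * #|U|.
Proof.
case: b => /=; last by rewrite mul0n -(cards0 U); apply: eq_card => x; rewrite !inE.
by rewrite mul1n; apply: eq_card => x; rewrite inE.
Qed.

Lemma card_constA (U : finType) (b : bool) (Q : pred U) :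
  #|[set x : U | b && Q x]| = b * #|[set x | Q x]|.
Proof.
case: b => /=; first by rewrite mul1n.
by rewrite mul0n -(cards0 U); apply: eq_card => x; rewrite !inE.
Qed.

Lemma sum_ne (F : 'I_k -> nat) i0 : \sum_i (i0 != i) * F i + F i0 = \sum_i F i.
Proof.
rewrite [RHS](bigD1 i0) //= (bigD1 i0) //= eqxx mul0n add0n addnC; congr (_ + _).
by apply: eq_bigr => i /negPf; rewrite eq_sym => ->; rewrite mul1n.
Qed.

Definition S m := \sum_(i < k | i < m) r i.
Definition a (i : 'I_k) := S i.+1 %/ 2 - S i %/ 2.
Definition A := [set v : T | tagged v < a (tag v)].
Definition hh : rel T := fun u v => kmp_adj u v && ((u \in A) != (v \in A)).

Lemma S_step (i : 'I_k) : S i.+1 = S i + r i.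
Proof.
rewrite /S (big_step _ _ (ltn_ord i)); congr (_ + r _); exact: val_inj.
Qed.

Lemma a_bounds i : [/\ r i <= (a i).*2.+1, (a i).*2 <= (r i).+1 & a i <= r i].
Proof. rewrite /a S_step; split; lia. Qed.

Lemma S0 : S 0 = 0.
Proof. by rewrite /S big_pred0. Qed.

Lemma sum_a_m m : m <= k -> \sum_(i < k | i < m) a i = S m %/ 2.
Proof.
elim: m => [|m IH] hm; first by rewrite big_pred0 // S0.
rewrite (big_step _ _ hm) IH ?(ltnW hm) //.
have := S_step (Ordinal hm); rewrite /a /=; lia.
Qed.

Lemma Sk : S k = \sum_i r i.
Proof. by apply: eq_bigl => i; rewrite ltn_ord. Qed.

Lemma sum_a : \sum_i a i = (\sum_i r i) %/ 2.
Proof. rewrite -Sk -sum_a_m //; by apply: eq_bigl => i; rewrite ltn_ord. Qed.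

Lemma card_A : #|A| = (\sum_i r i) %/ 2.
Proof.
rewrite -sum_a /A (card_kmp (fun v => tagged v < a (tag v))) /=.
apply: eq_bigr => i _; rewrite card_lt; have [_ _ ?] := a_bounds i; lia.
Qed.

Lemma card_T : #|T| = \sum_i r i.
Proof.
have -> : #|T| = #|[set w : T | true]| by apply: eq_card => x; rewrite inE.
rewrite (card_kmp (fun _ => true)); apply: eq_bigr => i _.
by rewrite card_const card_ord mul1n.
Qed.

Lemma sum_sub : \sum_i (r i - a i) + \sum_i a i = \sum_i r i.
Proof.
rewrite -big_split /=; apply: eq_bigr => i _; have [_ _ ?] := a_bounds i; lia.
Qed.

Lemma deg_e v : deg (@kmp_adj k r) v + r (tag v) = \sum_i r i.
Proof.
rewrite /deg (card_kmp (fun w => kmp_adj v w)) -(sum_ne r (tag v)); congr (_ + _).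
by apply: eq_bigr => i _; rewrite /kmp_adj /= card_const card_ord.
Qed.

Lemma deg_hA v : v \in A ->
  deg hh v + (r (tag v) - a (tag v)) = \sum_i (r i - a i).
Proof.
move=> vA; rewrite /deg (card_kmp (fun w => hh v w)) -(sum_ne (fun i => r i - a i) (tag v)); congr (_ + _).
apply: eq_bigr => i _; rewrite /hh /kmp_adj vA /=.
under eq_finset => j do rewrite inE /=.
rewrite card_constA card_ge; have [_ _ ?] := a_bounds i; congr (_ * _); lia.
Qed.

Lemma deg_hnA v : v \notin A ->
  deg hh v + a (tag v) = \sum_i a i.
Proof.
move=> /negPf vA; rewrite /deg (card_kmp (fun w => hh v w)) -(sum_ne a (tag v)); congr (_ + _).
apply: eq_bigr => i _; rewrite /hh /kmp_adj vA /=.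
under eq_finset => j do rewrite inE /=.
rewrite card_constA.
have -> : [set x : 'I_(r i) | false != (x < a i)] = [set x : 'I_(r i) | x < a i].
  by apply/setP => x; rewrite !inE; case: (x < a i).
rewrite card_lt; have [_ _ ?] := a_bounds i; by rewrite (minn_idPl _).
Qed.

End K.

Theorem mainTheorem5 (k : nat) (r : 'I_k -> nat)
  (hr : forall i, (0 < r i)%N)
  (heven : ~~ odd (\sum_(i < k) r i)) :
  exists (h : rel (kmp_vertex r)) (A : {set kmp_vertex r}),
    good_bisection (@kmp_adj k r) h A.
Proof.
exists (hh k r), (A k r).
have cA := card_A k r; have cT := card_T k r.
have cC := cardsC (A k r); rewrite cT cA in cC.
have ev := modn2 (\sum_i r i); rewrite (negbTE heven) /= in ev.
split; first split; [split; [split|]| split|].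
- by move=> u v; rewrite /hh /kmp_adj eq_sym; case: (u \in A k r); case: (v \in A k r).
- by move=> u; rewrite /hh /kmp_adj eqxx.
- by move=> u v /andP[].
- by move=> u v /andP[].
- split; lia.
- move=> v; have de := deg_e k r v; have [b1 b2 b3] := a_bounds k r (tag v).
  have ss := sum_sub k r; rewrite (sum_a k r) in ss.
  case: (boolP (v \in A k r)) => vA.
    have := deg_hA k r v vA; lia.
  have := deg_hnA k r v vA; rewrite (sum_a k r); lia.
Qed.
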